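(* Let $F_1,F_2:[0,1]\to[0,1]$ be homeomorphisms and let $0<a<1$ be such that $0,a,1$ are fixed points of both $F_1$ and $F_2$, and $F_1(t)>t$ and $F_2(t)>t$ for all $t\in[0,1]\setminus\{0,a,1\}$. Let $f_1,f_2:S^1\to S^1$ be the homeomorphisms of the circle induced by $F_1,F_2$ (via the identification $S^1=[0,1]/(0\sim1)$). Then the iterated function system $\mathcal{F}=\{S^1; f_\lambda\mid \lambda\in\{1,2\}\}$ does not have the average shadowing property.
   Context: The circle $S^1$ is identified with $[0,1)$ via the covering projection $\pi:\mathbb{R}\to S^1$, $\pi(x)=x \bmod 1$, and carries the metric $d$ induced by the usual distance on the real line (arc-length distance). An iterated function system (IFS) $\mathcal{F}=\{X; f_{\lambda}\mid\lambda\in\Lambda\}$ on a metric space $(X,d)$ is a family of continuous maps $f_\lambda:X\to X$ indexed by a finite nonempty set $\Lambda$. For $\sigma=(\lambda_0,\lambda_1,\dots)\in\Lambda^{\mathbb{Z}_+}$ write $\mathcal{F}_{\sigma_n}=f_{\lambda_{n-1}}\circ\cdots\circ f_{\lambda_0}$ for $n\ge1$ and $\mathcal{F}_{\sigma_0}=\mathrm{id}_X$. For $\delta>0$, a sequence $(x_i)_{i\ge0}$ in $X$ is a $\delta$-average pseudo-orbit of $\mathcal{F}$ if there exist a natural number $N$ and $\sigma=(\lambda_0,\lambda_1,\dots)\in\Lambda^{\mathbb{Z}_+}$ such that for all $n\ge N$, $\frac1n\sum_{i=0}^{n-1}d(f_{\lambda_i}(x_i),x_{i+1})<\delta$. A sequence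 $(x_i)_{i\ge0}$ is $\epsilon$-shadowed in average by $z\in X$ if there exists $\sigma\in\Lambda^{\mathbb{Z}_+}$ with $\limsup_{n\to\infty}\frac1n\sum_{i=0}^{n-1}d(\mathcal{F}_{\sigma_i}(z),x_i)<\epsilon$. $\mathcal{F}$ has the average shadowing property if for every $\epsilon>0$ there is $\delta>0$ such that every $\delta$-average pseudo-orbit of $\mathcal{F}$ is $\epsilon$-shadowed in average by some point of $X$. *)

(* Defs.v *)
From HB Require Import structures.
From mathcomp Require Import all_boot all_order all_algebra.
From mathcomp Require Import all_classical all_reals all_analysis.
Set Implicit Arguments. Unset Strict Implicit. Unset Printing Implicit Defensive.
Import Order.TTheory GRing.Theory Num.Theory.
Import numFieldNormedType.Exports.
Local Open Scope ring_scope.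
Local Open Scope classical_set_scope.

Section IFS.
Variables (R : realType) (X : Type) (L : Type).
Variables (d : X -> X -> R) (f : L -> X -> X).

Fixpoint ifs_orbit (sigma : nat -> L) (z : X) (n : nat) : X :=
  if n is m.+1 then f (sigma m) (ifs_orbit sigma z m) else z.

Definition avg_pseudo_orbit (delta : R) (x : nat -> X) : Prop :=
  exists (N : nat) (sigma : nat -> L), forall n : nat, (N <= n)%N ->
    n%:R^-1 * (\sum_(i < n) d (f (sigma i) (x i)) (x i.+1)) < delta.

Definition avg_shadowed (eps : R) (x : nat -> X) (z : X) : Prop :=
  exists sigma : nat -> L,
    (limn_esup (fun n : nat =>
       (n%:R^-1 * (\sum_(i < n) d (ifs_orbit sigma z i) (x i)))%:E)
     < eps%:E)%E.

Definition average_shadowing_property : Prop :=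
  forall eps : R, 0 < eps -> exists2 delta : R, 0 < delta &
    forall x : nat -> X, avg_pseudo_orbit delta x ->
      exists z : X, avg_shadowed eps x z.
End IFS.

Section Circle.
Variable R : realType.

Definition circle : Type := {x : R | 0 <= x < 1}.

Lemma frac_in01 (x : R) : 0 <= x - (Num.floor x)%:~R < 1.
Proof.
apply/andP; split; first by rewrite subr_ge0 floor_le.
rewrite ltrBlDr addrC -[1]/(1%:~R) -intrD; exact: floorD1_gt.
Qed.

Definition circ_proj (x : R) : circle := exist (fun y : R => 0 <= y < 1) _ (frac_in01 x).

Definition circ_dist (p q : circle) : R :=
  Num.min `|sval p - sval q| (1 - `|sval p - sval q|).

Definition induced_circle_map (F : R -> R) (p : circle) : circle :=
  circ_proj (F (sval p)).

Definition homeo01 (F : R -> R) : Prop :=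
  (forall t, t \in `[0, 1] -> F t \in `[0, 1]) /\
  exists G : R -> R,
    (forall t, t \in `[0, 1] -> G t \in `[0, 1]) /\
    (forall t, t \in `[0, 1] -> G (F t) = t) /\
    (forall t, t \in `[0, 1] -> F (G t) = t) /\
    {within `[0, 1], continuous F} /\ {within `[0, 1], continuous G}.
End Circle.

(* Main.v *)
Require Import Defs.
From HB Require Import structures.
From mathcomp Require Import all_boot all_order all_algebra.
From mathcomp Require Import all_classical all_reals all_analysis.
From mathcomp Require Import lra zify.
Import Order.TTheory GRing.Theory Num.Theory.
Import numFieldNormedType.Exports.
Local Open Scope ring_scope.

Section H.
Variable R : realType.

Lemma esup_lt_ev (u : nat -> R) (c : R) :
  (limn_esup (fun n => (u n)%:E) < c%:E)%E ->
  exists N, forall n, (N <= n)%N -> u n < c.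
Proof.
rewrite /limn_esup /limf_esup => /ereal_inf_lt [_ [V HV <-]] Hs.
case: HV => N _ HN; exists N => n Nn.
rewrite -lte_fin; apply: le_lt_trans Hs.
by apply: ereal_sup_ubound; exists n => //; apply: HN.
Qed.

Lemma frac_id (x : R) : 0 <= x < 1 -> sval (circ_proj x) = x.
Proof.
move=> hx /=; by rewrite (@floor_def _ x 0) ?subr0 //.
Qed.

Lemma circ_dist_half (p q : circle R) : circ_dist p q <= 1/2.
Proof.
rewrite /circ_dist ge_min; have [h|h] := lerP `|sval p - sval q| (1/2).
  by apply/orP; left.
by apply/orP; right; lra.
Qed.

Lemma circ_dist_ge0 (p q : circle R) : 0 <= circ_dist p q.
Proof.
case: p q => [x hx] [y hy]; case/andP: (hx) => x0 x1; case/andP: (hy) => y0 y1.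
rewrite /circ_dist /= le_min normr_ge0 /=.
have [h|h] := lerP y x.
  lra.
lra.
Qed.

Lemma circ_dist_xx (p : circle R) : circ_dist p p = 0.
Proof. by rewrite /circ_dist subrr normr0 subr0; apply/min_idPl. Qed.

Lemma dist_lb1 (y c e : R) : c <= y -> e <= y - c -> e <= 1 - (y - c) ->
  e <= Num.min `|y - c| (1 - `|y - c|).
Proof. by move=> h1 h2 h3; rewrite ger0_norm ?subr_ge0 // le_min h2 h3. Qed.

Lemma dist_lb2 (y c e : R) : y <= c -> e <= c - y -> e <= 1 - (c - y) ->
  e <= Num.min `|y - c| (1 - `|y - c|).
Proof. by move=> h1 h2 h3; rewrite distrC ger0_norm ?subr_ge0 // le_min h2 h3. Qed.

Lemma avg_real (n s b K delta : R) : 1 <= n -> s <= b / 2 -> 0 <= b -> b * K <= n ->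
  1 < K * delta -> 0 < delta -> n^-1 * s < delta.
Proof.
move=> n1 sb b0 bK Kd d0.
have n0 : 0 < n by lra.
rewrite mulrC ltr_pdivrMr //.
nra.
Qed.

Lemma sum_switch (x : nat -> circle R) (blk : nat -> nat) :
  blk 0 = 0%N -> (forall n, blk n <= blk n.+1)%N ->
  (forall n, blk n.+1 = blk n -> x n.+1 = x n) ->
  forall n, \sum_(i < n) circ_dist (x i) (x i.+1) <= (blk n)%:R / 2.
Proof.
move=> b0 bmon bx; elim=> [|n IH]; first by rewrite big_ord0 b0 mul0r.
rewrite big_ord_recr /=.
have [e|ne] := eqVneq (blk n.+1) (blk n).
  by rewrite bx // circ_dist_xx addr0 e.
have lt : (blk n < blk n.+1)%N by rewrite ltn_neqAle eq_sym ne bmon.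
have : ((blk n).+1%:R <= (blk n.+1)%:R :> R) by rewrite ler_nat.
rewrite -natr1 => h.
have := circ_dist_half (x n) (x n.+1).
lra.
Qed.

Lemma orbit_cases (y : nat -> R) (a : R) : 0 < a < 1 -> (forall n, 0 <= y n < 1) ->
  (forall n, y n <= y n.+1) ->
  exists tp : bool, exists T, forall i, (T <= i)%N ->
   Num.min (a/2) ((1-a)/2) <= Num.min `|y i - (if tp then a else 0)| (1 - `|y i - (if tp then a else 0)|).
Proof.
move=> /andP[a0 a1] yr ym.
set e0 := Num.min _ _.
have e1 : e0 <= a/2 by rewrite /e0 ge_min lexx.
have e2 : e0 <= (1-a)/2 by rewrite /e0 ge_min lexx orbT.
have mk : forall n k, y n <= y (n + k)%N.
  move=> n; elim=> [|k IH]; first by rewrite addn0.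
  by rewrite addnS (le_trans IH).
have mono : forall n m, (n <= m)%N -> y n <= y m.
  by move=> n m nm; rewrite -(subnKC nm).
case: (pselect (exists T, (1+a)/2 < y T)) => [[T hT]|nA].
  exists true, T => i Ti; have := mono _ _ Ti; have := yr i => /andP[y0 y1] yi.
  apply: dist_lb1; lra.
case: (pselect (exists T, a/2 < y T)) => [[T hT]|nB].
  exists false, T => i Ti; have := mono _ _ Ti; have := yr i => /andP[y0 y1] yi.
  have yb : y i <= (1+a)/2 by rewrite leNgt; apply/negP => h; apply: nA; exists i.
  apply: dist_lb1; lra.
exists true, 0%N => i _; have := yr i => /andP[y0 y1].
have yb : y i <= a/2 by rewrite leNgt; apply/negP => h; apply: nB; exists i.
apply: dist_lb2; lra.
Qed.

Lemma F_step (F : R -> R) (a : R) : homeo01 F -> F 0 = 0 -> F a = a -> F 1 = 1 ->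
  (forall t, t \in `[0,1] -> t != 0 -> t != a -> t != 1 -> t < F t) ->
  forall p : circle R, sval p <= sval (induced_circle_map F p).
Proof.
move=> [rng [G [_ [GF _]]]] F0 Fa F1 Hlt [t ht]; case/andP: (ht) => t0 t1.
have tI : t \in `[0, 1] by rewrite in_itv /= t0 ltW.
have tIc : t \in `[0, 1]%classic by rewrite inE.
have := rng t tIc; rewrite inE /= in_itv /= => /andP[Ft0 Ft1].
have Fne : F t != 1.
  apply/eqP => e; have := GF t tIc; rewrite e -{1}F1 GF ?inE ?in_itv /= ?ler01 ?lexx ?bound_itvE // => et.
  by move: t1; rewrite -et ltxx.
have Flt : F t < 1 by rewrite lt_neqAle Fne Ft1.
rewrite /induced_circle_map /= (@floor_def _ (F t) 0) ?subr0; last by rewrite add0r Ft0 Flt.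
have [->|n0] := eqVneq t 0; first by rewrite F0.
have [->|na] := eqVneq t a; first by rewrite Fa.
by apply/ltW/Hlt => //; rewrite lt_eqF.
Qed.

Lemma F_fix (F : R -> R) (p : circle R) : F (sval p) = sval p ->
  induced_circle_map F p = p.
Proof.
move=> h; apply: val_inj; rewrite /= /induced_circle_map h; apply: frac_id.
by case: p {h}.
Qed.

Lemma avg_real2 (nr S m e : R) : 1 <= nr -> nr <= 2 * m -> e * m <= S -> 0 <= e ->
  e / 2 <= nr^-1 * S.
Proof.
move=> n1 nm eS e0; have n0 : 0 < nr by lra.
rewrite ler_pdivlMl //; nra.
Qed.
End H.

Theorem mainTheorem5 (R : realType) (F1 F2 : R -> R) (a : R) :
  homeo01 F1 -> homeo01 F2 ->
  0 < a < 1 ->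
  F1 0 = 0 -> F1 a = a -> F1 1 = 1 ->
  F2 0 = 0 -> F2 a = a -> F2 1 = 1 ->
  (forall t : R, t \in `[0, 1] -> t != 0 -> t != a -> t != 1 ->
     t < F1 t /\ t < F2 t) ->
  ~ average_shadowing_property (@circ_dist R)
      (fun b : bool => if b then induced_circle_map F1 else induced_circle_map F2).
Proof.
move=> h1 h2 a01 F10 F1a F11 F20 F2a F21 Hgt ASP.
case/andP: (a01) => a0 a1.
set f := (X in average_shadowing_property _ X) in ASP.
have s1 := @F_step R F1 a h1 F10 F1a F11 (fun t tI t0 ta t1 => proj1 (Hgt t tI t0 ta t1)).
have s2 := @F_step R F2 a h2 F20 F2a F21 (fun t tI t0 ta t1 => proj2 (Hgt t tI t0 ta t1)).
have fstep : forall b p, sval p <= sval (f b p).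
  by case=> p; [exact: s1 | exact: s2].
pose e0 := Num.min (a/2) ((1-a)/2).
have e0pos : 0 < e0 by rewrite /e0 lt_min; apply/andP; split; lra.
have [delta dpos Hd] := ASP (e0/2) ltac:(lra).
pose K := (Num.truncn delta^-1).+1.
have Kpos : (0 < K)%N by [].
have HK : 1 < K%:R * delta.
  have := @truncnS_gt _ delta^-1; rewrite -/K => h.
  have : delta^-1 * delta < K%:R * delta by rewrite ltr_pM2r.
  by rewrite mulVf // gt_eqF.
have a0w : 0 <= a < 1 by rewrite ltW.
have z0w : (0 <= (0:R)) && ((0:R) < 1) by rewrite lexx ltr01.
pose pa : circle R := exist _ a a0w.
pose p0 : circle R := exist _ 0 z0w.
pose blk n := trunc_log 2 (n %/ K).+1.
pose x n := if odd (blk n) then pa else p0.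
have xfix : forall b i, f b (x i) = x i.
  by move=> [] i; rewrite /f /x; case: odd; apply: F_fix.
have Hpo : avg_pseudo_orbit (@circ_dist R) f delta x.
  exists 1%N, (fun _ => true) => n n1.
  under eq_bigr do rewrite xfix.
  have hb0 : blk 0%N = 0%N by rewrite /blk div0n trunc_log1.
  have hbm : forall n, (blk n <= blk n.+1)%N.
    by move=> m; rewrite /blk leq_trunc_log // ltnS leq_div2r.
  have hbx : forall n, blk n.+1 = blk n -> x n.+1 = x n by move=> m e; rewrite /x e.
  have hs := @sum_switch R x blk hb0 hbm hbx n.
  have hbK : (blk n * K <= n)%N.
    have g2 : (2 ^ blk n <= (n %/ K).+1)%N by apply: trunc_logP.
    have g3 : (blk n < 2 ^ blk n)%N by apply: ltn_expl.
    have g4 : (blk n <= n %/ K)%N by rewrite -ltnS (leq_trans g3).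
    by rewrite (leq_trans _ (leq_trunc_div n K)) // leq_mul2r g4 orbT.
  apply: (@avg_real R _ _ (blk n)%:R K%:R) => //.
  - by rewrite ler1n.
  - by rewrite -natrM ler_nat.
have [z [sigma Hs]] := Hd x Hpo.
have [N HN] := @esup_lt_ev R _ _ Hs.
pose orb i := ifs_orbit f sigma z i.
have yr : forall n, 0 <= sval (orb n) < 1 by move=> n; apply: (proj2_sig (orb n)).
have ym : forall n, sval (orb n) <= sval (orb n.+1) by move=> n; apply: fstep.
have [tp [T HT]] := @orbit_cases R (fun n => sval (orb n)) a a01 yr ym.
have Hlb : forall i, (T <= i)%N -> odd (blk i) = tp -> e0 <= circ_dist (orb i) (x i).
  by move=> i Ti hp; have := HT i Ti; rewrite /circ_dist /x hp; case: (tp).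
pose k := if tp then ((T+N).*2).+1 else (T+N).*2.
have kodd : odd k = tp by rewrite /k; case: (tp); rewrite /= odd_double.
have kge : (T + N <= k)%N by rewrite /k -addnn; case: (tp); lia.
pose P := (2 ^ k)%N.
have Pk : (k < P)%N by apply: ltn_expl.
have Ppos : (0 < P)%N by rewrite expn_gt0.
pose s := (K * P.-1)%N.
pose n := (K * (2 * P).-1)%N.
have Hblk : forall i, (s <= i < n)%N -> blk i = k.
  move=> i /andP[si ilt]; rewrite /blk; apply: trunc_log_eq => //.
  have g1 : (s %/ K <= i %/ K)%N := leq_div2r K si.
  rewrite /s mulKn // in g1.
  have g2 : (i %/ K < (2 * P).-1)%N by rewrite ltn_divLR // mulnC.
  rewrite expnS -/P; apply/andP; split; lia.
have hn : (N <= n)%N.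
  rewrite /n (leq_trans _ (leq_pmull _ Kpos)) //; lia.
have hsT : (T <= s)%N.
  rewrite /s (leq_trans _ (leq_pmull _ Kpos)) //; lia.
have sn : (s <= n)%N by rewrite /s /n leq_mul2l; apply/orP; right; lia.
have nsP : (n - s = K * P)%N by rewrite /n /s -mulnBr; congr muln; lia.
have n2 : (n <= 2 * (K * P))%N by rewrite /n mulnCA leq_mul2l leq_pred orbT.
have := HN n hn; apply/negP; rewrite -leNgt.
rewrite -(big_mkord xpredT (fun i => circ_dist (ifs_orbit f sigma z i) (x i))) (@big_cat_nat _ _ _ s 0 n _ _ (leq0n s) sn) /=.
have S1 : 0 <= \sum_(0 <= i < s) circ_dist (ifs_orbit f sigma z i) (x i).
  by apply: sumr_ge0 => i _; apply: circ_dist_ge0.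
have S2 : \sum_(s <= i < n) e0 <= \sum_(s <= i < n) circ_dist (ifs_orbit f sigma z i) (x i).
  apply: ler_sum_nat => i /andP[si ilt]; apply: Hlb.
    exact: leq_trans hsT si.
  by rewrite Hblk ?si.
rewrite sumr_const_nat nsP -mulr_natr in S2.
apply: (@avg_real2 R _ _ (K * P)%:R) => //.
- by rewrite ler1n /n muln_gt0 Kpos /=; lia.
- by rewrite -natrM ler_nat.
- lra.
- lra.
Qed.
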